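(* Let $n\ge2$. (i) Let $P$ be an invertible $n\times n$ matrix over $\mathbb{F}_{q^2}$, $A=P(E_{11}+\cdots+E_{n-1,n-1})P^\ast$, and $\mathbf{x}=P(y_1,\ldots,y_n)^\top$ with $y_n\neq 0$, so that $\mathcal{L}=\{A+\lambda\mathbf{x}\mathbf{x}^\ast: 0\neq\lambda\in\mathbb{F}_q\}$ is a leaf of $A$. Put $\mathbf{z}:=\big(-y_1/y_n,\ldots,-y_{n-1}/y_n\big)^\top$. Then for every nonzero $\lambda\in\mathbb{F}_q$, $$(A+\lambda\mathbf{x}\mathbf{x}^\ast)^{-1}=(P^{-1})^\ast\begin{bmatrix}I_{n-1}&\mathbf{z}\\ \mathbf{z}^\ast&\mathbf{z}^\ast\mathbf{z}+(\lambda y_n\bar y_n)^{-1}\end{bmatrix}P^{-1}.$$ If moreover $q\ge 3$, then $\mathcal{L}^{-1}:=\{(A+\lambda\mathbf{x}\mathbf{x}^\ast)^{-1}: 0\neq\lambda\in\mathbb{F}_q\}$ is the leaf of the matrix $N=(P^{-1})^\ast\begin{bmatrix}I_{n-1}&\mathbf{z}\\ \mathbf{z}^\ast&\mathbf{z}^\ast\mathbf{z}\end{bmatrix}P^{-1}$ generated by the vector $\mathbf{v}=(P^{-1})^\ast\mathbf{e}_n$, i.e. $\mathcal{L}^{-1}=\{N+\mu\mathbf{v}\mathbf{v}^\ast: 0\ne\mu\in\mathbb{F}_q\}$, where $\mathbf{e}_n=(0,\ldots,0,1)^\top$. (ii) Let $D$ be an invertible $(n-1)\times(n-1)$ hermitian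 matrix, $\mathbf{w}\in\mathbb{F}_{q^2}^{n-1}$ and $\mu\in\mathbb{F}_q$. Then $\begin{bmatrix}\mu&\mathbf{w}^\ast\\ \mathbf{w}&D\end{bmatrix}$ is invertible if and only if $\mu\neq\mathbf{w}^\ast D^{-1}\mathbf{w}$, in which case $$\begin{bmatrix}\mu&\mathbf{w}^\ast\\ \mathbf{w}&D\end{bmatrix}^{-1}=\begin{bmatrix}0&0\\0&D^{-1}\end{bmatrix}+\frac{1}{\mu-\mathbf{w}^\ast D^{-1}\mathbf{w}}\begin{bmatrix}-1\\ D^{-1}\mathbf{w}\end{bmatrix}\begin{bmatrix}-1\\ D^{-1}\mathbf{w}\end{bmatrix}^\ast.$$
   Context: $\mathbb{F}_{q^2}$ is the field with $q^2$ elements with involution $\bar x=x^q$, fixed field $\mathbb{F}_q$; $X^\ast=\bar X^\top$; hermitian means $A^\ast=A$. $E_{ii}$ is the matrix unit with $1$ in position $(i,i)$. Leaf: if $A$ is an $n\times n$ hermitian matrix of rank $s<n$ and $\mathbf{x}$ is not in the column space of $A$, then $\{A+\lambda\mathbf{x}\mathbf{x}^\ast: 0\ne\lambda\in\mathbb{F}_q\}$ is the leaf of $A$ generated by $\mathbf{x}$. *)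

(* Defs.v *)
From HB Require Import structures.
From mathcomp Require Import all_boot all_order all_algebra.
Set Implicit Arguments. Unset Strict Implicit. Unset Printing Implicit Defensive.
Import Order.TTheory GRing.Theory.
Local Open Scope ring_scope.

Section Herm.
Variables (F : finFieldType) (q : nat).

(* the involution x |-> x^q of F_{q^2} (when #|F| = q^2) *)
Definition hconj (x : F) : F := x ^+ q.

Definition inFq (x : F) : bool := x ^+ q == x.

Definition ctr m n (X : 'M[F]_(m, n)) : 'M[F]_(n, m) := (map_mx hconj X)^T.

Definition is_hermitian n (A : 'M[F]_n) : bool := ctr A == A.

Definition leaf_set n (A : 'M[F]_n) (x : 'cV[F]_n) : {set 'M[F]_n} :=
  [set A + l *: (x *m ctr x) | l : F & (l != 0) && inFq l].

Definition is_leaf n (A : 'M[F]_n) (x : 'cV[F]_n) (L : {set 'M[F]_n}) : Prop :=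
  [/\ is_hermitian A, (\rank A < n)%N, ~~ (x^T <= A^T)%MS & L = leaf_set A x].

End Herm.

(* Main.v *)
Require Import Defs.
From HB Require Import structures.
From mathcomp Require Import all_boot all_order all_algebra.
From mathcomp Require Import finfield ring.
Import Order.TTheory GRing.Theory.
Local Open Scope ring_scope.

Ltac sg := match goal with |- ?g => idtac g end.
Lemma cardp (F : finFieldType) : [pchar F].-nat #|F|.
Proof.
have [p pp cp] := finPcharP F.
have := card_pprimeChar cp.
move=> h. rewrite [X in _.-nat X](_ : _ = (p ^ logn p #|pPrimeCharType cp|)%N); last first.
  by rewrite -h.
rewrite (eq_pnat _ (pcharf_eq cp)) pnatX pnat_id //.
Qed.

Section H.
Variables (F : finFieldType) (q : nat).
Hypothesis hF : #|F| = (q ^ 2)%N.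

Lemma qnat : [pchar F].-nat q.
Proof. by have := cardp F; rewrite hF pnatX orbF. Qed.

Lemma hconjD (a b : F) : hconj q (a + b) = hconj q a + hconj q b.
Proof. by rewrite /hconj exprDn_pchar // qnat. Qed.
Lemma hconjM (a b : F) : hconj q (a * b) = hconj q a * hconj q b.
Proof. by rewrite /hconj exprMn. Qed.
Lemma hconj1 : hconj q (1:F) = 1. Proof. by rewrite /hconj expr1n. Qed.
Lemma hconjK (a : F) : hconj q (hconj q a) = a.
Proof. by rewrite /hconj -exprM mulnn -hF expf_card. Qed.

Lemma q_gt0 : (0 < q)%N.
Proof. by case: q hF (finNzRing_gt1 F) => // ->. Qed.
Lemma hconj0 : hconj q (0:F) = 0. Proof. by rewrite /hconj expr0n; case: q q_gt0. Qed.
Lemma hconjN (a : F) : hconj q (- a) = - hconj q a.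
Proof. by apply/eqP; rewrite -subr_eq0 opprK -hconjD addNr hconj0. Qed.
Lemma hconjB (a b : F) : hconj q (a - b) = hconj q a - hconj q b.
Proof. by rewrite hconjD hconjN. Qed.
HB.instance Definition _ := GRing.isZmodMorphism.Build F F (hconj q) hconjB.
HB.instance Definition _ := GRing.isMonoidMorphism.Build F F (hconj q) (conj hconj1 hconjM).
Local Notation ct := (ctr q).
Lemma ctrM (m n p : nat) (A : 'M[F]_(m,n)) (B : 'M[F]_(n,p)) : ct (A *m B) = ct B *m ct A.
Proof. by rewrite /ctr map_mxM trmx_mul. Qed.
Lemma ctrK (m n : nat) (A : 'M[F]_(m,n)) : ct (ct A) = A.
Proof. by apply/matrixP => i j; rewrite !mxE hconjK. Qed.
Lemma ctrD (m n : nat) (A B : 'M[F]_(m,n)) : ct (A + B) = ct A + ct B.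
Proof. by rewrite /ctr map_mxD linearD. Qed.
Lemma ctrN (m n : nat) (A : 'M[F]_(m,n)) : ct (- A) = - ct A.
Proof. by rewrite /ctr map_mxN linearN. Qed.
Lemma ctrZ (m n : nat) a (A : 'M[F]_(m,n)) : ct (a *: A) = hconj q a *: ct A.
Proof. by rewrite /ctr map_mxZ linearZ. Qed.
Lemma ctr0 (m n : nat) : ct (0 : 'M[F]_(m,n)) = 0.
Proof. by rewrite /ctr map_mx0 trmx0. Qed.
Lemma ctr_scalar (n : nat) a : ct (a%:M : 'M[F]_n) = (hconj q a)%:M.
Proof. by rewrite /ctr map_scalar_mx tr_scalar_mx. Qed.
Lemma ctr1 (n : nat) : ct (1%:M : 'M[F]_n) = 1%:M.
Proof. by rewrite ctr_scalar hconj1. Qed.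
Lemma ctr_block m1 m2 n1 n2 (a : 'M[F]_(m1,n1)) (b : 'M[F]_(m1,n2)) (c : 'M[F]_(m2,n1)) (d : 'M[F]_(m2,n2)) :
  ct (block_mx a b c d) = block_mx (ct a) (ct c) (ct b) (ct d).
Proof. by rewrite /ctr map_block_mx tr_block_mx. Qed.
Lemma ctr_col m1 m2 n (a : 'M[F]_(m1,n)) (b : 'M[F]_(m2,n)) :
  ct (col_mx a b) = row_mx (ct a) (ct b).
Proof. by rewrite /ctr map_col_mx tr_col_mx. Qed.
Lemma ctr_inv n (A : 'M[F]_n) : ct (invmx A) = invmx (ct A).
Proof. by rewrite /ctr map_invmx trmx_inv. Qed.
Lemma ctr_unit n (A : 'M[F]_n) : (ct A \in unitmx) = (A \in unitmx).
Proof. by rewrite /ctr unitmx_tr map_unitmx. Qed.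
Lemma part2 (m : nat) (D : 'M[F]_m) (w : 'cV[F]_m) (mu : F) :
     D \in unitmx -> is_hermitian q D -> inFq q mu ->
     let M := block_mx (mu%:M : 'M[F]_1) (ctr q w) w D in
     let s := (ctr q w *m invmx D *m w) ord0 ord0 in
     (M \in unitmx = (mu != s)) /\
     (mu != s ->
        let u := col_mx ((-1)%:M : 'M[F]_1) (invmx D *m w) in
        invmx M = block_mx (0 : 'M[F]_1) 0 0 (invmx D)
                  + (mu - s)^-1 *: (u *m ctr q u)).
Proof.
move=> uD /eqP hD _ M s.
set Di := invmx D.
have hs : ctr q w *m Di *m w = s%:M by apply: mx11_scalar.
have fac : M = block_mx 1%:M (ctr q w *m Di) 0 1%:M *m block_mx ((mu - s)%:M) 0 w D.
  rewrite mulmx_block !mul1mx !mul0mx !add0r mulmxKV // hs.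
  by rewrite -raddfD /= subrK.
have dD : \det D != 0 by rewrite -unitfE -unitmxE.
have uM : (M \in unitmx = (mu != s)).
  rewrite fac unitmxE det_mulmx det_ublock det_lblock !det1 det_scalar1 mul1r mul1r.
  by rewrite unitfE mulf_eq0 negb_or dD andbT subr_eq0.
split=> // hmu u.
have hMu : M \in unitmx by rewrite uM.
set R := (X in _ = X).
suff MR : M *m R = 1%:M by rewrite -[LHS]mulmx1 -MR mulKmx.
have cDi : ctr q Di = Di by rewrite /Di ctr_inv hD.
rewrite /R /u ctr_col ctrM cDi ctr_scalar hconjN // hconj1 mul_col_row scale_block_mx add_block_mx.
rewrite /M mulmx_block.
rewrite [in RHS](scalar_mx_block 1 m).
have mN1 k l (X : 'M[F]_(k,l)) : (-1)%:M *m X = - X by rewrite mul_scalar_mx scaleN1r.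
have mN1r k l (X : 'M[F]_(k,l)) : X *m (-1)%:M = - X by rewrite mul_mx_scalar scaleN1r.
have DDi : D *m Di = 1%:M by rewrite mulmxV.
rewrite !add0r !mN1 !mN1r !mulmxDr !mul_scalar_mx -!scalemxAr !mulmxN !mulmxA DDi !mul1mx hs.
rewrite !mul_scalar_mx mN1r -!scalemxAl.
have ms : mu - s != 0 by rewrite subr_eq0.
set a := ct w *m Di; set b := w *m ct w *m Di.
by congr block_mx; apply/matrixP => i j; rewrite !mxE; (try case: (i == j)); rewrite ?mulr1n ?mulr0n; field.
Qed.
Lemma core m (z : 'cV[F]_m) (a : F) : a != 0 ->
 let b := col_mx (-z) (1%:M : 'M_1) in
 (block_mx 1%:M 0 0 (0:'M_1) + a *: (b *m ct b)) *m
   block_mx 1%:M z (ct z) (ct z *m z + (a^-1)%:M) = 1%:M.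
Proof.
move=> a0 b.
rewrite /b ctr_col ctrN ctr1 mul_col_row scale_block_mx add_block_mx mulmx_block.
rewrite [in RHS](scalar_mx_block m 1).
rewrite ?mulmxDl ?mulmxDr ?mulmx1 ?mul1mx ?mul0mx ?mulmx0 ?addr0 ?add0r.
rewrite -?scalemxAl ?mulNmx ?mulmxN ?mul1mx ?mulmx1 ?mul_mx_scalar ?mulmxA ?opprK.
rewrite ?mulNmx ?mulmxN ?opprK ?mulmxA.
set zz := z *m ct z; set zsz := ct z *m z; set zzz := z *m ct z *m z.
by congr block_mx; apply/matrixP => i j; rewrite !mxE; (try case: (i == j)); rewrite ?mulr1n ?mulr0n; field.
Qed.
Lemma rank_lem (n k : nat) (P Q : 'M[F]_n) (C : 'M[F]_(n,k)) (R : 'M[F]_(k,n)) :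
  (\rank (P *m (C *m R) *m Q) <= k)%N.
Proof.
apply: leq_trans (mxrankM_maxl _ _) _; apply: leq_trans (mxrankM_maxr _ _) _.
apply: leq_trans (mxrankM_maxl _ _) _; exact: rank_leq_col.
Qed.
Lemma notcol_lem (n k : nat) (P Q : 'M[F]_n) (C : 'M[F]_(n,k)) (R : 'M[F]_(k,n)) (e : 'cV[F]_n) :
  P \in unitmx -> (forall d, e != C *m d) -> ~~ ((P *m e)^T <= (P *m (C *m R) *m Q)^T)%MS.
Proof.
move=> uP he; apply/negP => /submxP [D hD].
have := congr1 trmx hD; rewrite trmxK trmx_mul trmxK -!mulmxA => h.
have := congr1 (mulmx (invmx P)) h; rewrite !mulKmx // => h2.
by move: (he (R *m (Q *m D^T))); rewrite h2 eqxx.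
Qed.
Lemma herm_lem (n : nat) (P B : 'M[F]_n) : ct B = B -> is_hermitian q (P *m B *m ct P).
Proof. by move=> hB; apply/eqP; rewrite !ctrM ctrK hB mulmxA. Qed.
Lemma inFqM (a b : F) : inFq q a -> inFq q b -> inFq q (a * b).
Proof. by rewrite /inFq exprMn => /eqP -> /eqP ->. Qed.
Lemma inFqV (a : F) : inFq q a -> inFq q a^-1.
Proof. by rewrite /inFq exprVn => /eqP ->. Qed.
Lemma inFqN (a : F) : inFq q (a * hconj q a).
Proof. by apply/eqP; rewrite exprMn -/(hconj q _) -/(hconj q _) hconjK mulrC. Qed.
Lemma hconj_neq0 (a : F) : a != 0 -> hconj q a != 0.
Proof. by move=> a0; rewrite /hconj expf_neq0. Qed.

Lemma part1 (m : nat) (P : 'M[F]_(m + 1)) (y : 'cV[F]_(m + 1)) :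
     P \in unitmx -> y (rshift m ord0) ord0 != 0 ->
     let yn := y (rshift m ord0) ord0 in
     let A := P *m block_mx (1%:M : 'M[F]_m) 0 0 (0 : 'M[F]_1) *m ctr q P in
     let x := P *m y in
     let z : 'cV[F]_m := \col_(i < m) (- (y (lshift 1 i) ord0 / yn)) in
     let L := leaf_set q A x in
     is_leaf q A x L /\
     (forall l : F, l != 0 -> inFq q l ->
        A + l *: (x *m ctr q x) \in unitmx /\
        invmx (A + l *: (x *m ctr q x)) =
          ctr q (invmx P)
          *m block_mx (1%:M : 'M[F]_m) z (ctr q z)
                      (ctr q z *m z + ((l * yn * hconj q yn)^-1)%:M)
          *m invmx P) /\
     ((3 <= q)%N ->
        let N := ctr q (invmx P)
                 *m block_mx (1%:M : 'M[F]_m) z (ctr q z) (ctr q z *m z)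
                 *m invmx P in
        let v := ctr q (invmx P) *m col_mx (0 : 'cV[F]_m) (1 : 'cV[F]_1) in
        is_leaf q N v [set invmx B | B in L]).
Proof.
move=> uP ynz yn A x z L.
have yn0 : yn != 0 by [].
set S := block_mx (1%:M : 'M[F]_m) 0 0 (0 : 'M[F]_1).
have hS : S = col_mx (1%:M : 'M[F]_m) (0 : 'M[F]_(1,m)) *m row_mx 1%:M 0.
  by rewrite mul_col_row ?mulmx1 ?mulmx0 ?mul0mx.
set b := col_mx (-z) (1%:M : 'M[F]_1).
have ey : y = yn *: b.
  rewrite -[y]vsubmxK /b scale_col_mx; congr col_mx; apply/matrixP => i j; rewrite !mxE (ord1 j).
    by field.
  by rewrite (ord1 i) eqxx mulr1n mulr1.
have nn0 : yn * hconj q yn != 0 by rewrite mulf_neq0 // hconj_neq0.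
have hxx l : A + l *: (x *m ct x) = P *m (S + (l * yn * hconj q yn) *: (b *m ct b)) *m ct P.
  rewrite /A /x ctrM ey ctrZ mulmxDr mulmxDl; congr (_ + _).
  do 3!rewrite -?scalemxAl -?scalemxAr; rewrite !scalerA !mulmxA.
  by congr (_ *: _); ring.
have inv l : l != 0 -> inFq q l ->
        A + l *: (x *m ctr q x) \in unitmx /\
        invmx (A + l *: (x *m ctr q x)) =
          ctr q (invmx P)
          *m block_mx (1%:M : 'M[F]_m) z (ctr q z)
                      (ctr q z *m z + ((l * yn * hconj q yn)^-1)%:M)
          *m invmx P.
  move=> l0 _.
  have a0 : l * yn * hconj q yn != 0 by rewrite -mulrA mulf_neq0.
  have hc := @core m z _ a0.
  have prod : (A + l *: (x *m ct x)) *m (ct (invmx P) *m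
      block_mx (1%:M : 'M[F]_m) z (ctr q z) (ctr q z *m z + ((l * yn * hconj q yn)^-1)%:M)
      *m invmx P) = 1%:M.
    rewrite hxx -!mulmxA [ct P *m (ct (invmx P) *m _)]mulmxA -ctrM mulVmx // ctr1 mul1mx.
    by rewrite [_ *m (_ *m invmx P)]mulmxA hc mul1mx mulmxV.
  have [uB _] := mulmx1_unit prod.
  by split=> //; rewrite -[LHS]mulmx1 -prod mulKmx.
split.
  split=> //.
  - by apply: herm_lem; rewrite /S ctr_block ctr1 !ctr0.
  - by rewrite /A -/S hS; apply: leq_ltn_trans (rank_lem _ _ _ _ _ _) _; rewrite addn1 ltnSn.
  - rewrite /x /A -/S hS; apply: notcol_lem => // d; apply/eqP => h.
    have := congr1 (fun M => dsubmx M 0 0) h; rewrite mul_col_mx col_mxKd mul0mx /= !mxE.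
    by move/eqP; rewrite (negbTE ynz).
split=> // _ N v.
set Q := ct (invmx P).
set B0 := block_mx (1%:M : 'M[F]_m) z (ct z) (ct z *m z).
have hB0 : B0 = col_mx (1%:M : 'M[F]_m) (ct z) *m row_mx 1%:M z.
  by rewrite mul_col_row ?mulmx1 ?mul1mx.
have eN : N = Q *m B0 *m ct Q by rewrite /N /Q ctrK.
have uQ : Q \in unitmx by rewrite /Q ctr_unit unitmx_inv.
set e := col_mx (0 : 'cV[F]_m) (1 : 'cV[F]_1).
have e1 : (1 : 'cV[F]_1) = 1%:M by [].
have hK l : block_mx (1%:M : 'M[F]_m) z (ctr q z) (ctr q z *m z + ((l * yn * hconj q yn)^-1)%:M)
   = B0 + (l * yn * hconj q yn)^-1 *: (e *m ct e).
  rewrite /B0 /e e1 ctr_col ctr0 ctr1 mul_col_row scale_block_mx add_block_mx.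
  by rewrite ?mulmx0 ?mul0mx ?mulmx1 ?scaler0 ?addr0 scalemx1.
have keyN l : l != 0 -> inFq q l ->
   invmx (A + l *: (x *m ct x)) = N + (l * yn * hconj q yn)^-1 *: (v *m ct v).
  move=> l0 lq; have [_ ->] := inv l l0 lq.
  rewrite hK /N /v ctrM ctrK mulmxDr mulmxDl; congr (_ + _).
  by rewrite -scalemxAr -scalemxAl !mulmxA.
split.
- by rewrite eN; apply: herm_lem; rewrite /B0 ctr_block ctr1 ctrM ctrK.
- by rewrite eN hB0; apply: leq_ltn_trans (rank_lem _ _ _ _ _ _) _; rewrite addn1 ltnSn.
- rewrite /v eN hB0; apply: notcol_lem => // d; apply/eqP.
  rewrite mul_col_mx mul1mx => /eq_col_mx [<- h].
  by move: h; rewrite mulmx0 => /eqP; rewrite oner_eq0.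
apply/setP => X; apply/imsetP/imsetP.
- case=> B /imsetP [l]; rewrite inE => /andP [l0 lq] -> ->.
  exists (l * yn * hconj q yn)^-1; last exact: keyN.
  have a0 : l * yn * hconj q yn != 0 by rewrite -mulrA mulf_neq0.
  have aq : inFq q (l * yn * hconj q yn) by rewrite -mulrA inFqM // inFqN.
  by rewrite inE invr_eq0 a0 /= inFqV.
- case=> mu; rewrite inE => /andP [mu0 muq] ->.
  set l := (mu * (yn * hconj q yn))^-1.
  have l0 : l != 0 by rewrite invr_eq0 mulf_neq0.
  have lq : inFq q l by apply: inFqV; rewrite inFqM // inFqN.
  exists (A + l *: (x *m ct x)).
    by apply/imsetP; exists l => //; rewrite inE l0.
  rewrite keyN //; congr (_ + _ *: _).
  have hn : hconj q yn != 0 by rewrite hconj_neq0.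
  by rewrite /l; field; rewrite hn yn0 mu0 oner_eq0.
Qed.
Lemma main_sec (m : nat) (hm : (1 <= m)%N) :
  (forall (P : 'M[F]_(m + 1)) (y : 'cV[F]_(m + 1)),
     P \in unitmx -> y (rshift m ord0) ord0 != 0 ->
     let yn := y (rshift m ord0) ord0 in
     let A := P *m block_mx (1%:M : 'M[F]_m) 0 0 (0 : 'M[F]_1) *m ctr q P in
     let x := P *m y in
     let z : 'cV[F]_m := \col_(i < m) (- (y (lshift 1 i) ord0 / yn)) in
     let L := leaf_set q A x in
     is_leaf q A x L /\
     (forall l : F, l != 0 -> inFq q l ->
        A + l *: (x *m ctr q x) \in unitmx /\
        invmx (A + l *: (x *m ctr q x)) =
          ctr q (invmx P)
          *m block_mx (1%:M : 'M[F]_m) z (ctr q z)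
                      (ctr q z *m z + ((l * yn * hconj q yn)^-1)%:M)
          *m invmx P) /\
     ((3 <= q)%N ->
        let N := ctr q (invmx P)
                 *m block_mx (1%:M : 'M[F]_m) z (ctr q z) (ctr q z *m z)
                 *m invmx P in
        let v := ctr q (invmx P) *m col_mx (0 : 'cV[F]_m) (1 : 'cV[F]_1) in
        is_leaf q N v [set invmx B | B in L])) /\
  (forall (D : 'M[F]_m) (w : 'cV[F]_m) (mu : F),
     D \in unitmx -> is_hermitian q D -> inFq q mu ->
     let M := block_mx (mu%:M : 'M[F]_1) (ctr q w) w D in
     let s := (ctr q w *m invmx D *m w) ord0 ord0 in
     (M \in unitmx = (mu != s)) /\
     (mu != s ->
        let u := col_mx ((-1)%:M : 'M[F]_1) (invmx D *m w) in
        invmx M = block_mx (0 : 'M[F]_1) 0 0 (invmx D)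
                  + (mu - s)^-1 *: (u *m ctr q u))).
Proof.
split; first by move=> P y; exact: part1.
by move=> D w mu; exact: part2.
Qed.
End H.

Theorem lemma3p1 (F : finFieldType) (q m : nat) (hF : #|F| = (q ^ 2)%N)
  (hm : (1 <= m)%N) :
  (* part (i) *)
  (forall (P : 'M[F]_(m + 1)) (y : 'cV[F]_(m + 1)),
     P \in unitmx -> y (rshift m ord0) ord0 != 0 ->
     let yn := y (rshift m ord0) ord0 in
     let A := P *m block_mx (1%:M : 'M[F]_m) 0 0 (0 : 'M[F]_1) *m ctr q P in
     let x := P *m y in
     let z : 'cV[F]_m := \col_(i < m) (- (y (lshift 1 i) ord0 / yn)) in
     let L := leaf_set q A x in
     is_leaf q A x L /\
     (forall l : F, l != 0 -> inFq q l ->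
        A + l *: (x *m ctr q x) \in unitmx /\
        invmx (A + l *: (x *m ctr q x)) =
          ctr q (invmx P)
          *m block_mx (1%:M : 'M[F]_m) z (ctr q z)
                      (ctr q z *m z + ((l * yn * hconj q yn)^-1)%:M)
          *m invmx P) /\
     ((3 <= q)%N ->
        let N := ctr q (invmx P)
                 *m block_mx (1%:M : 'M[F]_m) z (ctr q z) (ctr q z *m z)
                 *m invmx P in
        let v := ctr q (invmx P) *m col_mx (0 : 'cV[F]_m) (1 : 'cV[F]_1) in
        is_leaf q N v [set invmx B | B in L])) /\
  (* part (ii) *)
  (forall (D : 'M[F]_m) (w : 'cV[F]_m) (mu : F),
     D \in unitmx -> is_hermitian q D -> inFq q mu ->
     let M := block_mx (mu%:M : 'M[F]_1) (ctr q w) w D in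
     let s := (ctr q w *m invmx D *m w) ord0 ord0 in
     (M \in unitmx = (mu != s)) /\
     (mu != s ->
        let u := col_mx ((-1)%:M : 'M[F]_1) (invmx D *m w) in
        invmx M = block_mx (0 : 'M[F]_1) 0 0 (invmx D)
                  + (mu - s)^-1 *: (u *m ctr q u))).
Proof. exact: (@main_sec F q hF m hm). Qed.
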